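(* Let $S$ be a semigroup and $m\ge1$ such that $S^m$ is a rectangular band. Then: (1) if $m=1$, $S$ is abelian; (2) $S$ is $(\lceil\log_2 m\rceil+1)$-solvable, and $\lceil\log_2 m\rceil$-solvable if $S^m$ is trivial (a single element); (3) $S$ is left $2m$-nilpotent, right $2m$-nilpotent and $2m$-supernilpotent, and in case $S^m$ is trivial it is left and right $m$-nilpotent and $m$-supernilpotent.
   Context: $S^m=\{a_1\cdots a_m: a_i\in S\}$. A rectangular band is a semigroup satisfying $x^2=x$ and $xyz=xz$. For an algebra $\mathbf A$ and congruences $\alpha_1,\dots,\alpha_n$, $M_{\mathbf A}(\alpha_1,\dots,\alpha_n)$ is the subalgebra of $\mathbf A^{\{0,1\}^n}$ generated by all $g$ such that for some $i$ and $(a,b)\in\alpha_i$, $g(x)=a$ if $x_i=0$ and $g(x)=b$ if $x_i=1$; $[\alpha_1,\dots,\alpha_n]$ is the smallest congruence $\delta$ such that for all $f\in M_{\mathbf A}(\alpha_1,\dots,\alpha_n)$: if $(f(x0),f(x1))\in\delta$ for all $x\in\{0,1\}^{n-1}\setminus\{(1,\dots,1)\}$ then $(f(1,\dots,1,0),f(1,\dots,1,1))\in\delta$. With $1$ total, $0$ trivial congruence: $[1]^0=1$, $[1]^{k+1}=[[1]^k,[1]^k]$; $(1]^1=1$, $(1]^{k+1}=[1,(1]^k]$; $[1)^1=1$, $[1)^{k+1}=[[1)^k,1]$. Abelian: $[1,1]=0$; $d$-solvable: $[1]^d=0$; left $d$-nilpotent: $(1]^{d+1}=0$; right $d$-nilpotent: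 $[1)^{d+1}=0$; $d$-supernilpotent: the $(d+1)$-ary $[1,\dots,1]=0$. *)

(* Defs.v *)
From mathcomp Require Import all_boot.
Set Implicit Arguments. Unset Strict Implicit. Unset Printing Implicit Defensive.

Section Commutators.
Variables (T : Type) (op : T -> T -> T).

Definition relT := T -> T -> Prop.

Definition is_cong (d : relT) : Prop :=
  [/\ forall a, d a a,
      forall a b, d a b -> d b a,
      forall a b c, d a b -> d b c -> d a c
    & forall a b c e, d a b -> d c e -> d (op a c) (op b e)].

Definition total_rel : relT := fun _ _ => True.
Definition is_zero (d : relT) : Prop := forall a b, d a b <-> a = b.

Definition cube (n : nat) := {ffun 'I_n -> bool}.

(* M_A(alpha_1,...,alpha_n): the subalgebra of T^{{0,1}^n} generated by the
   functions g with g(x) = a if x_i = 0 and g(x) = b if x_i = 1, (a,b) in alpha_i *)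
Inductive inM (n : nat) (al : 'I_n -> relT) : (cube n -> T) -> Prop :=
| M_gen (i : 'I_n) (a b : T) : al i a b -> inM al (fun x => if x i then b else a)
| M_op (f g : cube n -> T) : inM al f -> inM al g -> inM al (fun x => op (f x) (g x)).

(* x b : the point of {0,1}^(k+1) obtained by appending the bit b to x *)
Definition extc (k : nat) (x : cube k) (b : bool) : cube k.+1 :=
  [ffun i : 'I_k.+1 => if unlift ord_max i is Some j then x j else b].

Definition ones (k : nat) : cube k := [ffun _ => true].

Definition term_cond (k : nat) (al : 'I_k.+1 -> relT) (d : relT) : Prop :=
  forall f, inM al f ->
    (forall x : cube k, x != ones k -> d (f (extc x false)) (f (extc x true))) ->
    d (f (extc (ones k) false)) (f (extc (ones k) true)).

Definition comm (k : nat) (al : 'I_k.+1 -> relT) : relT :=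
  fun a b => forall d, is_cong d -> term_cond al d -> d a b.

Definition comm2 (al be : relT) : relT :=
  comm (k := 1) (fun i : 'I_2 => if val i == 0 then al else be).

Fixpoint dser (k : nat) : relT :=
  if k is k'.+1 then comm2 (dser k') (dser k') else total_rel.

(* lser k = (1]^(k+1) *)
Fixpoint lser (k : nat) : relT :=
  if k is k'.+1 then comm2 total_rel (lser k') else total_rel.

(* rser k = [1)^(k+1) *)
Fixpoint rser (k : nat) : relT :=
  if k is k'.+1 then comm2 (rser k') total_rel else total_rel.

Definition abelian_alg : Prop := is_zero (comm2 total_rel total_rel).
Definition solvable_alg (d : nat) : Prop := is_zero (dser d).
Definition left_nilpotent (d : nat) : Prop := is_zero (lser d).
Definition right_nilpotent (d : nat) : Prop := is_zero (rser d).
Definition supernilpotent (d : nat) : Prop :=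
  is_zero (comm (k := d) (fun _ => total_rel)).

(* spow k = S^(k+1) = { a_1 ... a_(k+1) } *)
Fixpoint spow (k : nat) : T -> Prop :=
  if k is k'.+1 then fun s => exists x y, spow k' x /\ s = op x y
  else fun _ => True.

Definition rect_band_set (P : T -> Prop) : Prop :=
  (forall x, P x -> op x x = x) /\
  (forall x y z, P x -> P y -> P z -> op (op x y) z = op x z).

Definition single_elt (P : T -> Prop) : Prop := exists e, forall s, P s <-> s = e.

End Commutators.

(* Main.v *)
Require Import Defs.
From mathcomp Require Import all_boot.
From Stdlib Require List.
Set Implicit Arguments. Unset Strict Implicit. Unset Printing Implicit Defensive.

Section Aux.
Variables (T : Type) (op : T -> T -> T).
Hypothesis assoc : associative op.

Lemma spow_S k x : spow op k.+1 x -> spow op k x.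
Proof.
elim: k x => [|k IH] x /=; first by [].
move=> [y [z [Hy ->]]]; exists y, z; split => //; exact: IH.
Qed.

Lemma spow_le k k' x : k <= k' -> spow op k' x -> spow op k x.
Proof.
move=> /subnK <-; elim: (k' - k) => [//|d IH] H; apply: IH; apply: spow_S.
by rewrite -addSn.
Qed.

Lemma spow_mul i j x y : spow op i x -> spow op j y -> spow op (i + j).+1 (op x y).
Proof.
elim: j y => [|j IH] y Hx.
- move=> _; rewrite addn0 /=; by exists x, y.
- move=> [y' [z [Hy' ->]]]; rewrite addnS /=; exists (op x y'), z; split.
  + exact: IH.
  + by rewrite assoc.
Qed.

Lemma spow_mull i x y : spow op i x -> spow op i (op x y).
Proof. move=> H; apply: spow_S => /=; by exists x, y. Qed.

Lemma spow_mulr j x y : spow op j y -> spow op j (op x y).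
Proof.
move=> H; apply: spow_S; have := spow_mul (i:=0) (x:=x) I H; by rewrite add0n.
Qed.

Lemma foldl_op a b t : foldl op (op a b) t = op a (foldl op b t).
Proof. elim: t a b => [//|c t IH] a b /=; by rewrite -(assoc a b c) IH. Qed.

Lemma foldl_cat2 a s b t : foldl op a (s ++ b :: t) = op (foldl op a s) (foldl op b t).
Proof. by rewrite foldl_cat /= foldl_op. Qed.

Lemma spow_foldl a s : spow op (size s) (foldl op a s).
Proof.
elim/last_ind: s => [//|s b IH]; rewrite foldl_rcons size_rcons /=.
by exists (foldl op a s), b.
Qed.

Section RB.
Variables (m : nat) (hm : 0 < m) (hRB : rect_band_set op (spow op m.-1)).
Local Notation B := (spow op m.-1).

Lemma idem x : B x -> op x x = x.
Proof. exact: hRB.1. Qed.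

Lemma xsz x s z : B x -> B z -> op (op x s) z = op x z.
Proof.
move=> Hx Hz; rewrite -{1}(idem Hx) -(assoc x x s); apply: hRB.2 => //.
exact: spow_mull.
Qed.

Lemma xsz' x s z : B x -> B z -> op x (op s z) = op x z.
Proof. by move=> Hx Hz; rewrite assoc; apply: xsz. Qed.

Lemma collapse a s b q p r r' : a :: s = (a :: p) ++ r -> a :: s = r' ++ b :: q ->
  size p = m.-1 -> size q = m.-1 -> foldl op a s = op (foldl op a p) (foldl op b q).
Proof.
move=> E1 E2 Hp Hq.
have HP : B (foldl op a p) by rewrite -Hp; apply spow_foldl.
have HQ : B (foldl op b q) by rewrite -Hq; apply spow_foldl.
have Hs : s = p ++ r by case: E1.
clear E1.
have HW : B (foldl op a s).
  apply: (spow_le (k':=size s)); last exact: spow_foldl.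
  by rewrite Hs size_cat Hp leq_addr.
have L : foldl op a s = foldl op a p \/ exists R, foldl op a s = op (foldl op a p) R.
  case: r Hs => [|c r] ->; first by left; rewrite cats0.
  by right; exists (foldl op c r); exact: foldl_cat2.
have Rr : foldl op a s = foldl op b q \/ exists R, foldl op a s = op R (foldl op b q).
  case: r' E2 => [|c r'] /= [Ea Es]; rewrite Es; first by left; rewrite -Ea.
  by right; exists (foldl op a r'); exact: foldl_cat2.
rewrite -(idem HW).
case: L => [EL|[R EL]]; case: Rr => [ER|[R' ER]]; rewrite {1}EL ER //.
- by apply: xsz'.
- by apply: xsz.
- by rewrite -(assoc _ R) (assoc R R'); apply: xsz'.
Qed.

Section Words.
Variable n : nat.
Definition deps1 (p : 'I_n * (cube n -> T)) :=
  forall x y : cube n, x p.1 = y p.1 -> p.2 x = p.2 y.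
Definition ev (g0 : 'I_n * (cube n -> T)) (l : seq ('I_n * (cube n -> T))) x := foldl op (g0.2 x) [seq q.2 x | q <- l].

Lemma Forall_cat (A : Type) (P : A -> Prop) (l1 l2 : seq A) :
  List.Forall P (l1 ++ l2) <-> List.Forall P l1 /\ List.Forall P l2.
Proof.
elim: l1 => [|a l1 IH] /=; first by split => [H|[]].
split.
  by move=> /List.Forall_cons_iff [Ha /IH [H1 H2]]; split => //; constructor.
move=> [/List.Forall_cons_iff [Ha H1] H2]; constructor => //; apply/IH; by split.
Qed.

Lemma inM_word (al : 'I_n -> relT T) f : inM op al f ->
  exists g0 l, List.Forall deps1 (g0 :: l) /\ forall x, f x = ev g0 l x.
Proof.
elim => [i a b _ | f1 f2 _ [g0 [l [H1 E1]]] _ [g0' [l' [H2 E2]]]].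
- exists (i, fun x : cube n => if x i then b else a), [::]; split => //.
  constructor => //; by move=> x y /= ->.
- exists g0, (l ++ g0' :: l'); split.
  + move: H1 => /List.Forall_cons_iff [Hg0 H1]; constructor => //; apply/Forall_cat; by split.
  + move=> x; by rewrite /ev E1 E2 map_cat /= foldl_cat2.
Qed.

Lemma dep_map (L : seq ('I_n * (cube n -> T))) (x y : cube n) : List.Forall deps1 L ->
  (forall i, i \in map fst L -> x i = y i) -> [seq q.2 x | q <- L] = [seq q.2 y | q <- L].
Proof.
elim: L => [//|q L IH] /List.Forall_cons_iff [Hq HL] H /=.
rewrite IH //; last by move=> i Hi; apply: H; rewrite inE Hi orbT.
congr (_ :: _); apply: Hq; apply: H; by rewrite inE eqxx.
Qed.

Lemma dep_ev g0 l (x y : cube n) : List.Forall deps1 (g0 :: l) ->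
  (forall i, i \in map fst (g0 :: l) -> x i = y i) -> ev g0 l x = ev g0 l y.
Proof. move=> HF H; have E := dep_map HF H; case: E => E1 E2; by rewrite /ev E1 E2. Qed.

Lemma word_dep_gen g0 l : List.Forall deps1 (g0 :: l) ->
  exists C : seq 'I_n, size C <= 2 * m /\
  forall x y : cube n, (forall i, i \in C -> x i = y i) -> ev g0 l x = ev g0 l y.
Proof.
move=> HF.
case: (ltnP (size l).+1 m) => Hs.
  exists (map fst (g0 :: l)); split; last by move=> x y; apply: dep_ev.
  rewrite size_map /=; apply: leq_trans (ltnW Hs) _; by rewrite leq_pmull.
set L := g0 :: l.
set k := size L - m.
have Hk : size (drop k L) = m by rewrite size_drop /k subKn.
case Ed: (drop k L) Hk => [|b q] Hk; first by move: hm; rewrite -Hk.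
set p := take m.-1 l.
have El : l = p ++ drop m.-1 l by rewrite cat_take_drop.
have EL : L = take k L ++ b :: q by rewrite -Ed cat_take_drop.
have HF1 : List.Forall deps1 (g0 :: p).
  by move: HF; rewrite {1}El -cat_cons => /Forall_cat [].
have HF2 : List.Forall deps1 (b :: q).
  by move: HF; rewrite -/L {1}EL => /Forall_cat [].
have Hp : size p = m.-1.
  rewrite size_takel //; by rewrite -ltnS prednK.
have Hq : size q = m.-1 by rewrite -Hk.
have Ec x : ev g0 l x = op (ev g0 p x) (ev b q x).
  apply: (collapse (r := [seq q.2 x | q <- drop m.-1 l])
                   (r' := [seq q.2 x | q <- take k L])); rewrite ?size_map //.
  - by rewrite {1}El map_cat.
  - by have := congr1 (map (fun q => q.2 x)) EL; rewrite map_cat.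
exists (map fst ((g0 :: p) ++ (b :: q))); split.
  by rewrite size_map size_cat /= Hp Hq prednK // mul2n addnn.
move=> x y H; rewrite !Ec; congr op; apply: dep_ev => // i Hi; apply: H;
  by rewrite map_cat mem_cat Hi ?orbT.
Qed.

Lemma word_dep_single g0 l : single_elt (spow op m.-1) -> List.Forall deps1 (g0 :: l) ->
  exists C : seq 'I_n, size C <= m /\
  forall x y : cube n, (forall i, i \in C -> x i = y i) -> ev g0 l x = ev g0 l y.
Proof.
move=> [e He] HF; case: (ltnP (size l).+1 m) => Hs.
  exists (map fst (g0 :: l)); split; first by rewrite size_map ltnW.
  by move=> x y; apply: dep_ev.
exists [::]; split => // x y _.
have Hb z : B (ev g0 l z).
  apply: (spow_le (k' := size l)); first by rewrite -ltnS prednK.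
  by have := spow_foldl (g0.2 z) [seq q.2 z | q <- l]; rewrite size_map.
by rewrite ((He _).1 (Hb x)) ((He _).1 (Hb y)).
Qed.
End Words.

Definition agree n (s : 'I_n) (x y : cube n) := forall i, i != s -> x i = y i.
Definition indep n (s : 'I_n) (f : cube n -> T) := forall x y, agree s x y -> f x = f y.
Definition sub (R1 R2 : relT T) := forall a b, R1 a b -> R2 a b.

Lemma indep_mul n (s : 'I_n) f g : indep s f -> indep s g ->
  indep s (fun x => op (f x) (g x)).
Proof. by move=> Hf Hg x y H; rewrite (Hf x y H) (Hg x y H). Qed.

Lemma gen_indep n (t s : 'I_n) (a b : T) : t != s -> indep s (fun x => if x t then b else a).
Proof. by move=> Hts x y H; rewrite (H t Hts). Qed.

Lemma const_indep n (t s : 'I_n) (a : T) : indep s (fun x => if x t then a else a).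
Proof. by move=> x y _; case: (x t); case: (y t). Qed.

Lemma tc_indep k (al : 'I_k.+1 -> relT T) (d : relT T) : (forall a, d a a) ->
  (forall f, inM op al f -> exists j, indep j f) -> term_cond op al d.
Proof.
move=> Hr H f Hf Hyp; have [j Hj] := H f Hf.
case: (unliftP ord_max j) => [j' Ej|Ej].
- pose x : cube k := [ffun i => i != j'].
  have Hx : x != ones k.
    apply/negP => /eqP E; have := congr1 (fun g : cube k => g j') E.
    by rewrite !ffunE eqxx.
  have E b : f (extc (ones k) b) = f (extc x b).
    apply: Hj => i Hi; rewrite !ffunE; case: (unliftP ord_max i) => [i' Ei|//].
    rewrite !ffunE; apply/esym/negP => /eqP Ei'; move: Hi.
    by rewrite Ei Ej Ei' eqxx.
  by rewrite !E; apply: Hyp.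
- have -> : f (extc (ones k) false) = f (extc (ones k) true); last exact: Hr.
  apply: Hj => i Hi; rewrite !ffunE; case: (unliftP ord_max i) => [i' _|Ei] //.
  by rewrite Ei Ej eqxx in Hi.
Qed.

Lemma ex_notin N (C : seq 'I_N.+1) : size C <= N -> exists j : 'I_N.+1, j \notin C.
Proof.
move=> Hs; case: (pickP (fun j : 'I_N.+1 => j \notin C)) => [j Hj|H]; first by exists j.
have: #|'I_N.+1| <= size C.
  apply: leq_trans (card_size C); apply: subset_leq_card; apply/subsetP => j _.
  by move: (H j) => /negbFE.
by rewrite card_ord ltnNge Hs.
Qed.

Lemma inM_mono n (al al' : 'I_n -> relT T) f : (forall t a b, al t a b -> al' t a b) ->
  inM op al f -> inM op al' f.
Proof.
move=> H; elim => [t a b Hab|f1 f2 _ H1 _ H2]; first by apply: M_gen; apply: H.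
exact: M_op.
Qed.

Lemma comm_refl k (al : 'I_k.+1 -> relT T) a : comm op al a a.
Proof. by move=> d [Hr _ _ _] _; apply: Hr. Qed.

Lemma eq_cong : is_cong op (fun a b : T => a = b).
Proof. by split => // [a b c -> ->|a b c e -> ->]. Qed.

Lemma zero_of (d : relT T) : sub d (fun a b => a = b) -> (forall a, d a a) -> is_zero d.
Proof. by move=> H Hr a b; split => [/H //|->]. Qed.

Lemma comm2_mono al al' be be' : sub al al' -> sub be be' ->
  sub (comm2 op al be) (comm2 op al' be').
Proof.
move=> Ha Hb a b H d Hd Ht; apply: H Hd _ => f Hf; apply: Ht.
by apply: inM_mono Hf => t x y; case: ifP => _; [apply: Ha|apply: Hb].
Qed.


Definition z1 : cube 1 := [ffun _ => false].

Lemma z1_ne : z1 != ones 1.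
Proof.
apply/negP => /eqP E; have := congr1 (fun g : cube 1 => g ord0) E.
by rewrite !ffunE.
Qed.

Lemma ord2 (i : 'I_2) : i = ord0 \/ i = ord_max.
Proof. by case: i => [[|[|k]] Hk]; [left|right|]; try apply: val_inj. Qed.

Lemma ext_max k (x : cube k) b : extc x b ord_max = b.
Proof. by rewrite ffunE unlift_none. Qed.

Lemma ext_0 (x : cube 1) b : extc x b ord0 = x ord0.
Proof.
rewrite ffunE; case: (unliftP ord_max ord0) => [j Ej|//].
by have -> : j = ord0 by apply: val_inj; case: j {Ej} => [[]].
Qed.

Lemma agree_max k (x : cube k) b b' : agree ord_max (extc x b) (extc x b').
Proof.
move=> i Hi; rewrite !ffunE; case: (unliftP ord_max i) => [i' _|Ei] //.
by rewrite Ei eqxx in Hi.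
Qed.

Lemma agree_0 (x y : cube 1) b : agree ord0 (extc x b) (extc y b).
Proof.
move=> i Hi; rewrite !ffunE; case: (unliftP ord_max i) => [j Ej|//].
have Ej0 : j = ord0 by apply: val_inj; case: j {Ej} => [[]].
by rewrite Ej Ej0 in Hi.
Qed.

Definition Rr k (a b : T) := a = b \/ (spow op k a /\ spow op k b).
Definition Sv n k (f : cube n -> T) := forall x, spow op k (f x).
Definition al2 (al be : relT T) := fun i : 'I_2 => if val i == 0 then al else be.

Lemma comm2_le al be d : is_cong op d ->
  term_cond op (al2 al be) d -> sub (comm2 op al be) d.
Proof. by move=> Hc Ht a b H; apply: H. Qed.

Lemma Rr_cong k : is_cong op (Rr k).
Proof.
split.
- by move=> a; left.
- by move=> a b [->|[Ha Hb]]; [left|right].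
- move=> a b c [->|[Ha Hb]] [<-|[Hb' Hc]]; by [left|right|right|right].
- move=> a b c e [->|[Ha Hb]] [->|[Hc He]]; first by left.
  + by right; split; apply: spow_mulr.
  + by right; split; apply: spow_mull.
  + by right; split; apply: spow_mull.
Qed.

Lemma rees_inv i j f : inM op (al2 (Rr i) (Rr j)) f ->
  (indep ord0 f \/ Sv i f) /\ (indep ord_max f \/ Sv j f) /\
  (indep ord0 f \/ indep ord_max f \/ Sv (i + j).+1 f).
Proof.
elim => {f} [t a b | f g _ [F1 [F2 F3]] _ [G1 [G2 G3]]].
- case: (ord2 t) => ->; rewrite /al2 /= => -[<-|[Ha Hb]].
  + by split; [left|split; left]; apply: const_indep.
  + split; first by right => x; case: (x ord0).
    by split; [left|right; left]; apply: gen_indep.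
  + by split; [left|split; left]; apply: const_indep.
  + split; first by left; apply: gen_indep.
    split; first by right => x; case: (x ord_max).
    by left; apply: gen_indep.
- split.
    case: F1 => F1; last by right => x; apply: spow_mull.
    case: G1 => G1; last by right => x; apply: spow_mulr.
    by left; apply: indep_mul.
  split.
    case: F2 => F2; last by right => x; apply: spow_mull.
    case: G2 => G2; last by right => x; apply: spow_mulr.
    by left; apply: indep_mul.
  case: F3 => [f0|[f1|fS]]; last by right; right => x; apply: spow_mull.
  + case: G3 => [g0|[g1|gS]]; last by right; right => x; apply: spow_mulr.
    * by left; apply: indep_mul.
    * case: G1 => [g0|gi]; first by left; apply: indep_mul.
      case: F2 => [f1|fj]; first by right; left; apply: indep_mul.
      by right; right => x; rewrite addnC; apply: spow_mul.
  + case: G3 => [g0|[g1|gS]]; last by right; right => x; apply: spow_mulr.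
    * case: F1 => [f0|fi]; first by left; apply: indep_mul.
      case: G2 => [g1|gj]; first by right; left; apply: indep_mul.
      by right; right => x; apply: spow_mul.
    * by right; left; apply: indep_mul.
Qed.

Lemma rees_tc i j : term_cond op (al2 (Rr i) (Rr j)) (Rr (i + j).+1).
Proof.
move=> f Hf Hyp; have [_ [_ [H|[H|H]]]] := rees_inv Hf.
- have E b : f (extc (ones 1) b) = f (extc z1 b) by apply: H; apply: agree_0.
  by rewrite !E; apply: Hyp; exact: z1_ne.
- by left; apply: H; apply: agree_max.
- by right; split; apply: H.
Qed.

Lemma Rr_le k k' : k <= k' -> sub (Rr k') (Rr k).
Proof.
move=> H a b [->|[Ha Hb]]; first by left.
by right; split; [apply: spow_le Ha|apply: spow_le Hb].
Qed.

Lemma total_Rr0 : sub (@total_rel T) (Rr 0).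
Proof. by move=> a b _; right. Qed.

Definition Cst n (f : cube n -> T) := forall x y, f x = f y.
Definition LA (f : cube 2 -> T) := exists P, Sv m.-1 P /\ (indep ord0 P \/ indep ord_max P) /\
  forall x z, B z -> op (f x) z = op (P x) z.
Definition RA (f : cube 2 -> T) := exists Q, Sv m.-1 Q /\ (indep ord0 Q \/ indep ord_max Q) /\
  forall x z, B z -> op z (f x) = op z (Q x).

Lemma ab_inv f : inM op (al2 (Rr m.-1) (Rr m.-1)) f ->
  Cst f \/ (Sv m.-1 f /\ LA f /\ RA f).
Proof.
elim => {f} [t a b | f g _ Hf _ Hg].
- rewrite /al2; case: ifP => _ [<-|[Ha Hb]]; try by left => x y; case: (x t); case: (y t).
  + have HB : Sv m.-1 (fun x : cube 2 => if x t then b else a) by move=> x; case: (x t).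
    have HI : indep ord0 (fun x : cube 2 => if x t then b else a) \/
              indep ord_max (fun x : cube 2 => if x t then b else a).
      by case: (ord2 t) => ->; [right|left]; apply: gen_indep.
    by right; split => //; split; [exists (fun x : cube 2 => if x t then b else a)|
         exists (fun x : cube 2 => if x t then b else a)].
  + have HB : Sv m.-1 (fun x : cube 2 => if x t then b else a) by move=> x; case: (x t).
    have HI : indep ord0 (fun x : cube 2 => if x t then b else a) \/
              indep ord_max (fun x : cube 2 => if x t then b else a).
      by case: (ord2 t) => ->; [right|left]; apply: gen_indep.
    by right; split => //; split; [exists (fun x : cube 2 => if x t then b else a)|
         exists (fun x : cube 2 => if x t then b else a)].
- case: Hf => [Fc|[FB [FL FR]]]; case: Hg => [Gc|[GB [GL GR]]].
  + by left => x y; rewrite (Fc x y) (Gc x y).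
  + right; split; first by move=> x; apply: spow_mulr.
    split.
    * case: GL => P [PB [PI PE]]; exists (fun x => op (f x) (P x)); split.
        by move=> x; apply: spow_mulr.
      split; last by move=> x z Hz; rewrite -!assoc PE.
      have Fi s : indep s f by move=> x y _; apply: Fc.
      by case: PI => PI; [left|right]; apply: indep_mul.
    * case: GR => Q [QB [QI QE]]; exists Q; split => //; split => // x z Hz.
      by rewrite xsz' //; apply: QE.
  + right; split; first by move=> x; apply: spow_mull.
    split.
    * case: FL => P [PB [PI PE]]; exists P; split => //; split => // x z Hz.
      by rewrite xsz //; apply: PE.
    * case: FR => Q [QB [QI QE]]; exists (fun x => op (Q x) (g x)); split.
        by move=> x; apply: spow_mull.
      split; last by move=> x z Hz; rewrite !assoc QE.
      have Gi s : indep s g by move=> x y _; apply: Gc.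
      by case: QI => QI; [left|right]; apply: indep_mul.
  + right; split; first by move=> x; apply: spow_mull.
    split.
    * case: FL => P [PB [PI PE]]; exists P; split => //; split => // x z Hz.
      by rewrite xsz //; apply: PE.
    * case: GR => Q [QB [QI QE]]; exists Q; split => //; split => // x z Hz.
      by rewrite xsz' //; apply: QE.
Qed.

Lemma ab_tc : term_cond op (al2 (Rr m.-1) (Rr m.-1)) (fun a b => a = b).
Proof.
move=> f Hf Hyp; case: (ab_inv Hf) => [Fc|[FB [[P [PB [PI PE]]] [Q [QB [QI QE]]]]]].
  exact: Fc.
have EPQ x : f x = op (P x) (Q x).
  have e1 : f x = op (P x) (f x) by rewrite -(PE x (f x) (FB x)) (idem (FB x)).
  have e2 : f x = op (f x) (Q x) by rewrite -(QE x (f x) (FB x)) (idem (FB x)).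
  by rewrite {1}e1 e2; apply: xsz'.
have Hy := Hyp z1 z1_ne; rewrite !EPQ in Hy *.
set a0 := extc z1 false in Hy *; set a1 := extc z1 true in Hy *.
set b0 := extc (ones 1) false; set b1 := extc (ones 1) true.
have m0 (R : cube 2 -> T) : indep ord0 R -> R b0 = R a0 /\ R b1 = R a1.
  by move=> H; split; apply: H; apply: agree_0.
have mm (R : cube 2 -> T) : indep ord_max R -> R a0 = R a1 /\ R b0 = R b1.
  by move=> H; split; apply: H; apply: agree_max.
case: PI => /[dup] PI' => [/m0|/mm] [E1 E2]; case: QI => [/m0|/mm] [E3 E4].
- by rewrite E1 E2 E3 E4.
- rewrite E1 E2 -E4; rewrite -E3 in Hy.
  have := congr1 (fun w => op w (Q b0)) Hy.
  by rewrite /= !xsz.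
- rewrite -E2 E3 E4; rewrite -E1 in Hy.
  have := congr1 (fun w => op (P b0) w) Hy.
  by rewrite /= !xsz'.
- by rewrite E2 E4.
Qed.

Definition Lc (u : option T) a := if u is Some u' then op u' a else a.
Definition Rc a (v : option T) := if v is Some v' then op a v' else a.
Definition cge k (u : option T) := if u is Some u' then spow op k.-1 u' else k = 0.
Definition ieq a b := forall z, B z -> op a z = op b z.
Definition jeq a b := forall z, B z -> op z a = op z b.
Definition Dk k (a b : T) := a = b \/ (B a /\ B b /\
  (forall u, cge k u -> ieq (Lc u a) (Lc u b)) /\ (forall v, cge k v -> jeq (Rc a v) (Rc b v))).

Lemma ieq_trans a b c : ieq a b -> ieq b c -> ieq a c.
Proof. by move=> H1 H2 z Hz; rewrite H1 // H2. Qed.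
Lemma ieq_sym a b : ieq a b -> ieq b a.
Proof. by move=> H z Hz; rewrite H. Qed.
Lemma jeq_trans a b c : jeq a b -> jeq b c -> jeq a c.
Proof. by move=> H1 H2 z Hz; rewrite H1 // H2. Qed.
Lemma jeq_sym a b : jeq a b -> jeq b a.
Proof. by move=> H z Hz; rewrite H. Qed.

Lemma cge_le k k' u : k' <= k -> cge k u -> cge k' u.
Proof.
case: u => [u'|] /= H.
  by apply: spow_le; rewrite -!subn1 leq_sub2r.
by move=> Hk; move: H; rewrite Hk leqn0 => /eqP.
Qed.

Lemma cge_extL k u s : cge k u -> cge k.+1 (Some (Lc u s)).
Proof.
case: u => [u'|] /= H; last by rewrite H.
case: k H => [|k] H //=; by exists u', s.
Qed.

Lemma cge_extR k v s : cge k v -> cge k.+1 (Some (Rc s v)).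
Proof.
case: v => [v'|] /= H; last by rewrite H.
case: k H => [|k] H //=; have := spow_mul (i:=0) (x:=s) I H; by rewrite add0n.
Qed.

Lemma cge_ext1 k u s : cge k.-1 u -> cge k (Some (Lc u s)).
Proof. by move=> H; apply: (cge_le (k := k.-1.+1)); [apply: leqSpred|apply: cge_extL]. Qed.
Lemma cge_ext1R k v s : cge k.-1 v -> cge k (Some (Rc s v)).
Proof. by move=> H; apply: (cge_le (k := k.-1.+1)); [apply: leqSpred|apply: cge_extR]. Qed.

Lemma Lc_op u a b : Lc u (op a b) = op (Lc u a) b.
Proof. by case: u => //= u'; rewrite assoc. Qed.
Lemma Lc_opL u w a : Lc u (op w a) = Lc (Some (Lc u w)) a.
Proof. by case: u => //= u'; rewrite assoc. Qed.
Lemma Rc_op a b v : Rc (op a b) v = op a (Rc b v).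
Proof. by case: v => //= v'; rewrite assoc. Qed.
Lemma Rc_opR a w v : Rc (op a w) v = Rc a (Some (Rc w v)).
Proof. by case: v => //= v'; rewrite assoc. Qed.

Lemma B_Lc u a : B a -> B (Lc u a).
Proof. by case: u => //= u' H; apply: spow_mulr. Qed.
Lemma B_Rc a v : B a -> B (Rc a v).
Proof. by case: v => //= v' H; apply: spow_mull. Qed.

Lemma ieq_ext u a w : B a -> ieq (Lc u (op a w)) (Lc u a).
Proof. by move=> Ha z Hz; rewrite Lc_op xsz //; apply: B_Lc. Qed.
Lemma jeq_ext v w a : B a -> jeq (Rc (op w a) v) (Rc a v).
Proof. by move=> Ha z Hz; rewrite Rc_op xsz' //; apply: B_Rc. Qed.

Lemma Dk_r k a b s : Dk k a b -> Dk k (op a s) (op b s).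
Proof.
move=> [->|[Ha [Hb [HL HR]]]]; first by left.
right; split; first by apply: spow_mull.
split; first by apply: spow_mull.
split.
- move=> u Hu; apply: ieq_trans (ieq_ext _ _ Ha) _.
  by apply: ieq_trans (HL u Hu) (ieq_sym (ieq_ext _ _ Hb)).
- move=> v Hv; rewrite !Rc_opR; apply: HR.
  by apply: cge_le (cge_extR _ Hv).
Qed.

Lemma Dk_l k a b s : Dk k a b -> Dk k (op s a) (op s b).
Proof.
move=> [->|[Ha [Hb [HL HR]]]]; first by left.
right; split; first by apply: spow_mulr.
split; first by apply: spow_mulr.
split.
- move=> u Hu; rewrite !Lc_opL; apply: HL.
  by apply: cge_le (cge_extL _ Hu).
- move=> v Hv; apply: jeq_trans (jeq_ext _ _ Ha) _.
  by apply: jeq_trans (HR v Hv) (jeq_sym (jeq_ext _ _ Hb)).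
Qed.

Lemma Dk_trans k a b c : Dk k a b -> Dk k b c -> Dk k a c.
Proof.
move=> [->//|[Ha [Hb [HL HR]]]] [<-|[Hb' [Hc [HL' HR']]]]; first by right.
right; do 2!split => //; split.
- by move=> u Hu; apply: ieq_trans (HL u Hu) (HL' u Hu).
- by move=> v Hv; apply: jeq_trans (HR v Hv) (HR' v Hv).
Qed.

Lemma Dk_cong k : is_cong op (Dk k).
Proof.
split.
- by move=> a; left.
- move=> a b [->|[Ha [Hb [HL HR]]]]; first by left.
  right; do 2!split => //; split.
  + by move=> u Hu; apply: ieq_sym; apply: HL.
  + by move=> v Hv; apply: jeq_sym; apply: HR.
- exact: Dk_trans.
- move=> a b c e H1 H2; apply: Dk_trans (Dk_r _ H1) (Dk_l _ H2).
Qed.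

Lemma Dk0_eq a b : Dk 0 a b -> a = b.
Proof.
move=> [//|[Ha [Hb [HL HR]]]].
have H1 : op a a = op b a := HL None erefl a Ha.
have H2 : op b a = op b b := HR None erefl b Hb.
by rewrite -(idem Ha) H1 H2 idem.
Qed.

Lemma Rr_Dm : sub (Rr m.-1) (Dk m).
Proof.
move=> a b [->|[Ha Hb]]; first by left.
right; do 2!split => //; split.
- case => [u'|] /= Hu; last by move: hm; rewrite Hu.
  by move=> z Hz; rewrite !xsz.
- case => [v'|] /= Hv; last by move: hm; rewrite Hv.
  by move=> z Hz; rewrite !xsz'.
Qed.

Lemma Dk_ieq k c0 c1 u b b' : Dk k c0 c1 -> cge k u ->
  ieq (Lc u (if b then c1 else c0)) (Lc u (if b' then c1 else c0)).
Proof.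
move=> [->|[_ [_ [HL _]]]] Hu; first by case: b; case: b'.
by case: b; case: b' => //; [apply: ieq_sym|]; apply: HL.
Qed.

Lemma Dk_jeq k c0 c1 v b b' : Dk k c0 c1 -> cge k v ->
  jeq (Rc (if b then c1 else c0) v) (Rc (if b' then c1 else c0) v).
Proof.
move=> [->|[_ [_ [_ HR]]]] Hv; first by case: b; case: b'.
by case: b; case: b' => //; [apply: jeq_sym|]; apply: HR.
Qed.

Section DInv.
Variables (n : nat) (s : 'I_n) (k : nat) (al : 'I_n -> relT T).
Hypothesis Hal : forall a b, al s a b -> Dk k a b.

Definition LD (f : cube n -> T) :=
  (exists c0 c1, Dk k c0 c1 /\ forall u x, ieq (Lc u (f x)) (Lc u (if x s then c1 else c0))) \/
  (forall u x y, cge k.-1 u -> agree s x y -> ieq (Lc u (f x)) (Lc u (f y))).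
Definition RD (f : cube n -> T) :=
  (exists c0 c1, Dk k c0 c1 /\ forall v x, jeq (Rc (f x) v) (Rc (if x s then c1 else c0) v)) \/
  (forall v x y, cge k.-1 v -> agree s x y -> jeq (Rc (f x) v) (Rc (f y) v)).

Lemma LD_ext f g : Sv m.-1 f -> LD f -> LD (fun x => op (f x) (g x)).
Proof.
move=> FB [[c0 [c1 [Hc FE]]]|FE].
- left; exists c0, c1; split => // u x.
  by apply: ieq_trans (ieq_ext _ _ (FB x)) (FE u x).
- right => u x y Hu Hxy.
  apply: ieq_trans (ieq_ext _ _ (FB x)) _.
  by apply: ieq_trans (FE u x y Hu Hxy) (ieq_sym (ieq_ext _ _ (FB y))).
Qed.

Lemma RD_ext f g : Sv m.-1 g -> RD g -> RD (fun x => op (f x) (g x)).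
Proof.
move=> GB [[c0 [c1 [Hc GE]]]|GE].
- left; exists c0, c1; split => // v x.
  by apply: jeq_trans (jeq_ext _ _ (GB x)) (GE v x).
- right => v x y Hv Hxy.
  apply: jeq_trans (jeq_ext _ _ (GB x)) _.
  by apply: jeq_trans (GE v x y Hv Hxy) (jeq_sym (jeq_ext _ _ (GB y))).
Qed.

Lemma LD_indep f g : indep s f -> LD g -> LD (fun x => op (f x) (g x)).
Proof.
move=> Fi GL; right => u x y Hu Hxy; rewrite (Fi x y Hxy) !Lc_opL.
have Hu' := cge_ext1 (f y) Hu.
case: GL => [[c0 [c1 [Hc GE]]]|GE].
- apply: ieq_trans (GE _ x) _; apply: ieq_trans (ieq_sym (GE _ y)).
  exact: Dk_ieq Hc Hu'.
- by apply: GE => //; apply: cge_le Hu'; apply: leq_pred.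
Qed.

Lemma RD_indep f g : indep s g -> RD f -> RD (fun x => op (f x) (g x)).
Proof.
move=> Gi FR; right => v x y Hv Hxy; rewrite (Gi x y Hxy) !Rc_opR.
have Hv' := cge_ext1R (g y) Hv.
case: FR => [[c0 [c1 [Hc FE]]]|FE].
- apply: jeq_trans (FE _ x) _; apply: jeq_trans (jeq_sym (FE _ y)).
  exact: Dk_jeq Hc Hv'.
- by apply: FE => //; apply: cge_le Hv'; apply: leq_pred.
Qed.

Lemma d_inv f : inM op al f -> indep s f \/ (Sv m.-1 f /\ LD f /\ RD f).
Proof.
elim => {f} [t a b Hab | f g _ Hf _ Hg].
- case: (eqVneq t s) => [Ets|Hts]; last by left; apply: gen_indep.
  rewrite Ets in Hab *; have HD := Hal Hab; case: (HD) => [Eab|[Ha [Hb _]]].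
    by left; rewrite Eab; apply: const_indep.
  right; split; first by move=> x; case: (x s).
  by split; [left|left]; exists a, b; split => // ? ? ? ?.
- case: Hf => [Fi|[FB [FL FR]]]; case: Hg => [Gi|[GB [GL GR]]].
  + by left; apply: indep_mul.
  + right; split; first by move=> x; apply: spow_mulr.
    by split; [apply: LD_indep|apply: RD_ext].
  + right; split; first by move=> x; apply: spow_mull.
    by split; [apply: LD_ext|apply: RD_indep].
  + right; split; first by move=> x; apply: spow_mull.
    by split; [apply: LD_ext|apply: RD_ext].
Qed.
End DInv.

Lemma lser_tc k : term_cond op (al2 (@total_rel T) (Dk k)) (Dk k.-1).
Proof.
move=> f Hf Hyp.
have Hal : forall a b, al2 (@total_rel T) (Dk k) ord_max a b -> Dk k a b by [].
case: (d_inv Hal Hf) => [Fi|[FB [FL FR]]].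
  by left; apply: Fi; apply: agree_max.
have [HyL HyR] : (forall u, cge k.-1 u -> ieq (Lc u (f (extc z1 false))) (Lc u (f (extc z1 true)))) /\
                 (forall v, cge k.-1 v -> jeq (Rc (f (extc z1 false)) v) (Rc (f (extc z1 true)) v)).
  case: (Hyp z1 z1_ne) => [->|[_ [_ [HL HR]]]]; last by split.
  by split => ? ? ? ?.
right; split; first exact: FB.
split; first exact: FB.
split.
- move=> u Hu; case: FL => [[c0 [c1 [Hc FE]]]|FE]; last by apply: FE => //; apply: agree_max.
  have E1 := FE u (extc (ones 1) false); have E2 := FE u (extc (ones 1) true).
  have E3 := FE u (extc z1 false); have E4 := FE u (extc z1 true).
  rewrite !ext_max in E1 E2 E3 E4.
  apply: ieq_trans E1 _; apply: ieq_trans (ieq_sym E3) _.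
  apply: ieq_trans (HyL u Hu) _; apply: ieq_trans E4 (ieq_sym E2).
- move=> v Hv; case: FR => [[c0 [c1 [Hc FE]]]|FE]; last by apply: FE => //; apply: agree_max.
  have E1 := FE v (extc (ones 1) false); have E2 := FE v (extc (ones 1) true).
  have E3 := FE v (extc z1 false); have E4 := FE v (extc z1 true).
  rewrite !ext_max in E1 E2 E3 E4.
  apply: jeq_trans E1 _; apply: jeq_trans (jeq_sym E3) _.
  apply: jeq_trans (HyR v Hv) _; apply: jeq_trans E4 (jeq_sym E2).
Qed.

Lemma rser_tc k : term_cond op (al2 (Dk k) (@total_rel T)) (Dk k.-1).
Proof.
move=> f Hf Hyp.
have Hal : forall a b, al2 (Dk k) (@total_rel T) ord0 a b -> Dk k a b by [].
case: (d_inv Hal Hf) => [Fi|[FB [FL FR]]].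
  have E b : f (extc (ones 1) b) = f (extc z1 b) by apply: Fi; apply: agree_0.
  by rewrite !E; apply: Hyp; exact: z1_ne.
have [HyL HyR] : (forall u, cge k.-1 u -> ieq (Lc u (f (extc z1 false))) (Lc u (f (extc z1 true)))) /\
                 (forall v, cge k.-1 v -> jeq (Rc (f (extc z1 false)) v) (Rc (f (extc z1 true)) v)).
  case: (Hyp z1 z1_ne) => [->|[_ [_ [HL HR]]]]; last by split.
  by split => ? ? ? ?.
have o1 b : extc (ones 1) b ord0 = true by rewrite ext_0 ffunE.
right; split; first exact: FB.
split; first exact: FB.
split.
- move=> u Hu; case: FL => [[c0 [c1 [Hc FE]]]|FE].
    have E1 := FE u (extc (ones 1) false); have E2 := FE u (extc (ones 1) true).
    rewrite !o1 in E1 E2; exact: ieq_trans E1 (ieq_sym E2).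
  apply: ieq_trans (FE u _ (extc z1 false) Hu (agree_0 _ _ _)) _.
  apply: ieq_trans (HyL u Hu) _.
  exact: FE u _ _ Hu (agree_0 _ _ _).
- move=> v Hv; case: FR => [[c0 [c1 [Hc FE]]]|FE].
    have E1 := FE v (extc (ones 1) false); have E2 := FE v (extc (ones 1) true).
    rewrite !o1 in E1 E2; exact: jeq_trans E1 (jeq_sym E2).
  apply: jeq_trans (FE v _ (extc z1 false) Hv (agree_0 _ _ _)) _.
  apply: jeq_trans (HyR v Hv) _.
  exact: FE v _ _ Hv (agree_0 _ _ _).
Qed.

Lemma exp_pred k : (2 ^ k.+1).-1 = ((2 ^ k).-1 + (2 ^ k).-1).+1.
Proof.
rewrite expnS mul2n -addnn; case: (2 ^ k) (expn_gt0 2 k) => [//|t] _ /=.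
by rewrite addnS.
Qed.

Lemma dser_Rr k : sub (dser op k) (Rr (2 ^ k).-1).
Proof.
elim: k => [|k IH]; first exact: total_Rr0.
rewrite exp_pred => a b H; exact: (comm2_le (Rr_cong _) (rees_tc (i:=(2^k).-1) (j := (2^k).-1)) (comm2_mono IH IH H)).

Qed.

Lemma lser_Rr k : sub (lser op k) (Rr k).
Proof.
elim: k => [|k IH]; first exact: total_Rr0.
move=> a b H; exact: (comm2_le (Rr_cong _) (rees_tc (i:=0) (j:=k)) (comm2_mono total_Rr0 IH H)).
Qed.

Lemma rser_Rr k : sub (rser op k) (Rr k).
Proof.
elim: k => [|k IH]; first exact: total_Rr0.
move=> a b H; have := comm2_le (Rr_cong _) (rees_tc (i:=k) (j:=0)) (comm2_mono IH total_Rr0 H).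
by rewrite addn0.
Qed.

Lemma lser_D t : sub (lser op (m.-1 + t)) (Dk (m - t)).
Proof.
elim: t => [|t IH].
  by rewrite addn0 subn0 => a b H; apply: Rr_Dm; apply: lser_Rr.
rewrite addnS subnS => a b H.
exact: (comm2_le (Dk_cong _) (lser_tc (k := m - t)) (comm2_mono (fun _ _ x => x) IH H)).
Qed.

Lemma rser_D t : sub (rser op (m.-1 + t)) (Dk (m - t)).
Proof.
elim: t => [|t IH].
  by rewrite addn0 subn0 => a b H; apply: Rr_Dm; apply: rser_Rr.
rewrite addnS subnS => a b H.
exact: (comm2_le (Dk_cong _) (rser_tc (k := m - t)) (comm2_mono IH (fun _ _ x => x) H)).
Qed.

Lemma Rr_single : single_elt B -> sub (Rr m.-1) (fun a b => a = b).
Proof. by move=> [e He] a b [->|[Ha Hb]] //; rewrite (He a).1 // (He b).1. Qed.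

Lemma dser_le_B : sub (dser op (up_log 2 m)) (Rr m.-1).
Proof.
move=> a b H; apply: (Rr_le _ (dser_Rr H)).
by rewrite -!subn1 leq_sub2r // up_logP.
Qed.

Lemma part_abel : m = 1 -> abelian_alg op.
Proof.
move=> Em; apply: zero_of; last by move=> a; apply: comm_refl.
move=> a b H; apply: (comm2_le eq_cong ab_tc).
have HT : sub (@total_rel T) (Rr m.-1) by rewrite Em; exact: total_Rr0.
exact: (comm2_mono HT HT H).
Qed.

Lemma part_solv : solvable_alg op (up_log 2 m).+1.
Proof.
apply: zero_of; last by move=> a; apply: comm_refl.
move=> a b H; apply: (comm2_le eq_cong ab_tc).
exact: (comm2_mono dser_le_B dser_le_B H).
Qed.

Lemma part_solv1 : single_elt B -> solvable_alg op (up_log 2 m).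
Proof.
move=> Hs; apply: zero_of => [a b H|a]; first exact: (Rr_single Hs (dser_le_B H)).
case: (up_log 2 m) => [//|L]; exact: comm_refl.
Qed.

Lemma two_m : 2 * m = m.-1 + m.+1.
Proof. by rewrite addnS -addSn prednK // mul2n addnn. Qed.

Lemma m_sub : m - m.+1 = 0.
Proof. by apply/eqP; rewrite subn_eq0 leqnSn. Qed.

Lemma part_lnil : left_nilpotent op (2 * m).
Proof.
apply: zero_of => [a b|a].
  rewrite two_m => H; apply: Dk0_eq; have := lser_D H; by rewrite m_sub.
rewrite two_m addnS; exact: comm_refl.
Qed.

Lemma part_rnil : right_nilpotent op (2 * m).
Proof.
apply: zero_of => [a b|a].
  rewrite two_m => H; apply: Dk0_eq; have := rser_D H; by rewrite m_sub.
rewrite two_m addnS; exact: comm_refl.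
Qed.

Lemma part_lnil1 : single_elt B -> left_nilpotent op m.
Proof.
move=> Hs; apply: zero_of => [a b H|a].
  by apply: (Rr_single Hs); apply: (Rr_le (leq_pred m)); apply: lser_Rr.
by rewrite -(prednK hm); exact: comm_refl.
Qed.

Lemma part_rnil1 : single_elt B -> right_nilpotent op m.
Proof.
move=> Hs; apply: zero_of => [a b H|a].
  by apply: (Rr_single Hs); apply: (Rr_le (leq_pred m)); apply: rser_Rr.
by rewrite -(prednK hm); exact: comm_refl.
Qed.

Lemma part_snil : supernilpotent op (2 * m).
Proof.
apply: zero_of => [a b H|a]; last exact: comm_refl.
apply: H; first exact: eq_cong.
apply: tc_indep => // f Hf.
have [g0 [l [HF Ef]]] := inM_word Hf; have [C [HC HD]] := word_dep_gen HF.
have [j Hj] := ex_notin HC.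
exists j => x y Hxy; rewrite !Ef; apply: HD => i Hi; apply: Hxy.
by apply/eqP => Eij; move: Hj; rewrite -Eij Hi.
Qed.

Lemma part_snil1 : single_elt B -> supernilpotent op m.
Proof.
move=> Hs; apply: zero_of => [a b H|a]; last exact: comm_refl.
apply: H; first exact: eq_cong.
apply: tc_indep => // f Hf.
have [g0 [l [HF Ef]]] := inM_word Hf; have [C [HC HD]] := word_dep_single Hs HF.
have [j Hj] := ex_notin HC.
exists j => x y Hxy; rewrite !Ef; apply: HD => i Hi; apply: Hxy.
by apply/eqP => Eij; move: Hj; rewrite -Eij Hi.
Qed.
End RB.
End Aux.

Theorem lemma3p2 (T : Type) (op : T -> T -> T) (assoc : associative op)
  (m : nat) (hm : 0 < m) (hRB : rect_band_set op (spow op m.-1)) :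
  (m = 1 -> abelian_alg op) /\
  solvable_alg op (up_log 2 m).+1 /\
  (single_elt (spow op m.-1) -> solvable_alg op (up_log 2 m)) /\
  left_nilpotent op (2 * m) /\ right_nilpotent op (2 * m) /\ supernilpotent op (2 * m) /\
  (single_elt (spow op m.-1) ->
     left_nilpotent op m /\ right_nilpotent op m /\ supernilpotent op m).
Proof.
split; first exact (part_abel assoc hRB).
split; first exact (part_solv assoc hRB).
split; first exact (part_solv1 assoc (m:=m)).
split; first exact (part_lnil assoc hm hRB).
split; first exact (part_rnil assoc hm hRB).
split; first exact (part_snil assoc hm hRB).
move=> Hs; split; first exact (part_lnil1 assoc hm Hs).
split; first exact (part_rnil1 assoc hm Hs).
exact (part_snil1 assoc hm Hs).
Qed.
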